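(* A choice probability function $q_1:[0,\infty)\to[0,1]$ (depending only on the price $p_1$ of good 1) is QRUM-rationalizable if and only if: (A) $q_1$ is non-increasing; (B) $q_1$ is continuous; and (C) there exist prices $p_L$ and $p_H$ such that $\lim_{p_1\searrow p_L}q_1(p_1)=1$ and $\lim_{p_1\nearrow p_H}q_1(p_1)=0$.
   Context: Two goods: good 0 with price $0$ and good 1 with price $p_1\ge 0$; consumers have common income $y$ (large relative to prices) and spend the remainder on a numeraire. $q_1(p_1)$ is the population probability of choosing good 1. Definition (quasi-linear random utility model, QRUM): $q_1$ is QRUM-rationalizable if there exist a random variable $\eta$ with distribution $H$ and functions $V_0(\eta),V_1(\eta)$ and $\beta(\eta)>0$ (giving utilities $U_0(y,\eta)=V_0(\eta)+\beta(\eta)y$ and $U_1(y-p_1,\eta)=V_1(\eta)+\beta(\eta)(y-p_1)$) such that for all $p_1$, $q_1(p_1)=\int\mathbb{1}\{V_0(\eta)\le V_1(\eta)-\beta(\eta)p_1\}\,dH(\eta)$, and (i) for every $p_1$, $\int\mathbb{1}\{V_0(\eta)=V_1(\eta)-\beta(\eta)p_1\}\,dH(\eta)=0$; (ii) there exist a low price $p_L$ with $\lim_{p_1\searrow p_L}\Pr[V_0(\eta)\le V_1(\eta)-\beta(\eta)p_1]=1$ and a high price $p_H$ with $\lim_{p_1\nearrow p_H}\Pr[V_0(\eta)\le V_1(\eta)-\beta(\eta)p_1]=0$. *)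

(* Defs.v *)
From HB Require Import structures.
From mathcomp Require Import all_boot all_order all_algebra.
From mathcomp Require Import all_classical all_reals all_analysis.
Set Implicit Arguments. Unset Strict Implicit. Unset Printing Implicit Defensive.
Import Order.TTheory GRing.Theory Num.Theory.
Import numFieldNormedType.Exports.
Local Open Scope classical_set_scope.
Local Open Scope ring_scope.

(* A QRUM: a random variable eta (realised on a probability space T with law P,
   playing the role of H) and measurable V0, V1, beta with beta > 0. *)
Definition qrum_prob {R : realType} {d : measure_display} {T : measurableType d}
  (P : probability T R) (V0 V1 beta : T -> R) (p : R) : \bar R :=
  P [set eta | V0 eta <= V1 eta - beta eta * p].

Definition qrum_tie {R : realType} {d : measure_display} {T : measurableType d}
  (P : probability T R) (V0 V1 beta : T -> R) (p : R) : \bar R :=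
  P [set eta | V0 eta = V1 eta - beta eta * p].

Definition QRUM_rationalizable {R : realType} (q1 : R -> R) : Prop :=
  exists (d : measure_display) (T : measurableType d) (P : probability T R)
         (V0 V1 beta : T -> R),
    [/\ measurable_fun setT V0, measurable_fun setT V1, measurable_fun setT beta &
        (forall eta, 0 < beta eta)] /\
    [/\
        (forall p, 0 <= p -> (q1 p)%:E = qrum_prob P V0 V1 beta p),
        (forall p, 0 <= p -> qrum_tie P V0 V1 beta p = 0%E) &
        exists pL pH : R, [/\ 0 <= pL, 0 < pH,
          qrum_prob P V0 V1 beta p @[p --> pL^'+] --> 1%E &
          qrum_prob P V0 V1 beta p @[p --> pH^'-] --> 0%E]].

Definition nonincreasing_on_prices {R : realType} (q1 : R -> R) : Prop :=
  forall x y : R, 0 <= x -> x <= y -> q1 y <= q1 x.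

(* Main.v *)
Require Import Defs.
From HB Require Import structures.
From mathcomp Require Import all_boot all_order all_algebra.
From mathcomp Require Import all_classical all_reals all_analysis.
From mathcomp Require Import measurable_realfun.
From mathcomp Require Import lra.
Import Order.TTheory GRing.Theory Num.Theory.
Import numFieldNormedType.Exports.
Local Open Scope classical_set_scope.
Local Open Scope ring_scope.


Lemma EFin_cvgP {R : realType} {I : Type} {F : set_system I} {FF : Filter F}
  (f : I -> R) (a : R) : (fun i => (f i)%:E) @ F --> a%:E <-> f @ F --> a.
Proof.
rewrite fine_cvgP; split; first by case.
by move=> h; split => //; exact: nearW.
Qed.

Lemma near_ltr {R : realType} (x z : R) : x < z -> \forall y \near x, y < z.
Proof.
move=> xz; exists (z - x); first by rewrite /= subr_gt0.
move=> y /= h.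
have : y - x < z - x by rewrite (le_lt_trans (ler_norm _)) // distrC.
by rewrite ltrD2r.
Qed.

Definition goodq {R : realType} (q1 : R -> R) : Prop :=
  [/\ forall p : R, 0 <= p -> 0 <= q1 p <= 1,
      nonincreasing_on_prices q1,
      {within `[0, +oo[, continuous q1} &
      exists pL pH : R, [/\ 0 <= pL, 0 < pH,
        q1 p @[p --> pL^'+] --> (1 : R) &
        q1 p @[p --> pH^'-] --> (0 : R)]].

Lemma goodq0 {R : realType} {q1 : R -> R} (H : goodq q1) : q1 0 = 1.
Proof.
case: H => hq nd _ [pL [pH [pL0 pH0 cL _]]].
apply/eqP; rewrite eq_le; have /andP[_ ->] := hq 0 (lexx 0) => /=.
apply: (cvgr_to_le cL); near=> p; apply: nd => //.
have : pL < p by near: p; exact: nbhs_right_gt.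
by move=> h; rewrite ltW // (le_lt_trans pL0 h).
Unshelve. all: by end_near. Qed.

Lemma goodqH {R : realType} {q1 : R -> R} (H : goodq q1) :
  exists pH : R, 0 < pH /\ forall p, pH <= p -> q1 p = 0.
Proof.
case: H => hq nd _ [pL [pH [pL0 pH0 _ cH]]].
exists pH; split => // p hp.
have p0 : 0 <= p by rewrite (le_trans (ltW pH0)).
apply/eqP; rewrite eq_le; have /andP[-> _] := hq p p0; rewrite andbT.
apply: (cvgr_to_ge cH); near=> x; apply: nd.
  by apply: ltW; near: x; exact: nbhs_left_gt.
by rewrite (le_trans _ hp) // ltW //; near: x; exact: nbhs_left_lt.
Unshelve. all: by end_near. Qed.

Definition Qx {R : realType} (q1 : R -> R) (p : R) : R := q1 (Num.max p 0).

Lemma Qx_cont {R : realType} {q1 : R -> R} (H : goodq q1) : continuous (Qx q1).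
Proof.
have q10 := goodq0 H.
case: H => hq nd cq _.
move/continuous_within_itvcyP: cq => [cin c0].
move=> x; have [x0|x0|->] := ltgtP x 0.
- have e : {near (x : R), (fun _ => Qx q1 x) =1 Qx q1}.
    near=> y.
    have y0 : y < 0 by near: y; exact: near_ltr.
    by rewrite /Qx !max_r ?(ltW y0) ?(ltW x0).
  exact: cvg_trans (near_eq_cvg e) (cvg_cst _).
- have xin : x \in `]0, +oo[ by rewrite in_itv /= andbT.
  have e : {near (x : R), (fun y => q1 y) =1 Qx q1}.
    near=> y.
    have y0 : 0 < y by near: y; exact: lt_nbhsr.
    by rewrite /Qx max_l // ltW.
  have := cin x xin.
  rewrite /continuous_at {2}/Qx (max_l (ltW x0)).
  exact: cvg_trans (near_eq_cvg e).
- apply/left_right_continuousP; split.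
  + have e : {near (0 : R)^'-, (fun _ => Qx q1 0) =1 Qx q1}.
      near=> y.
      have y0 : y < 0 by near: y; exact: nbhs_left_lt.
      by rewrite /Qx !max_r ?(ltW y0).
    exact: cvg_trans (near_eq_cvg e) (cvg_cst _).
  + have e : {near (0 : R)^'+, (fun y => q1 y) =1 Qx q1}.
      near=> y.
      have y0 : 0 < y by near: y; exact: nbhs_right_gt.
      by rewrite /Qx max_l // ltW.
    rewrite {2}/Qx maxxx.
    exact: cvg_trans (near_eq_cvg e) c0.
Unshelve. all: by end_near. Qed.



Definition fQ {R : realType} {q1 : R -> R} (H : goodq q1) (x : R) : R :=
  Qx q1 (- x).

Lemma fQ_cont {R : realType} {q1 : R -> R} (H : goodq q1) : continuous (fQ H).
Proof.
move=> x; rewrite /fQ.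
apply: (@continuous_comp _ _ _ (fun y : R => - y) (Qx q1)).
  exact: oppr_continuous.
exact: Qx_cont.
Qed.

Lemma fQ_nd {R : realType} {q1 : R -> R} (H : goodq q1) : nondecreasing (fQ H).
Proof.
move=> x y xy; rewrite /fQ /Qx.
case: H => _ nd _ _; apply: nd; first by rewrite le_max lexx orbT.
by rewrite ge_max !le_max lerN2 xy lexx !orbT.
Qed.

Lemma fQ_rc {R : realType} {q1 : R -> R} (H : goodq q1) : right_continuous (fQ H).
Proof. exact: right_continuousW (fQ_cont H). Qed.

HB.instance Definition _ {R : realType} {q1 : R -> R} (H : goodq q1) :=
  isCumulative.Build R _ R (fQ H) (fQ_nd H) (fQ_rc H).

Lemma fQ_Ny {R : realType} {q1 : R -> R} (H : goodq q1) : fQ H @ -oo --> (0:R).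
Proof.
have [pH [pH0 hH]] := goodqH H.
have e : {near -oo, (fun _ => 0 : R) =1 fQ H}.
  near=> y.
  have y0 : y < - pH by near: y; apply: nbhs_ninfty_lt; exact: num_real.
  rewrite /fQ /Qx max_l; last by rewrite (le_trans (ltW pH0)) // lerNr ltW.
  by rewrite hH // lerNr ltW.
exact: cvg_trans (near_eq_cvg e) (cvg_cst _).
Unshelve. all: by end_near. Qed.

Lemma fQ_y {R : realType} {q1 : R -> R} (H : goodq q1) : fQ H @ +oo --> (1:R).
Proof.
have e : {near +oo, (fun _ => 1 : R) =1 fQ H}.
  near=> y.
  have y0 : 0 < y by near: y; apply: nbhs_pinfty_gt; exact: num_real.
  by rewrite /fQ /Qx max_r ?goodq0 // oppr_le0 ltW.
exact: cvg_trans (near_eq_cvg e) (cvg_cst _).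
Unshelve. all: by end_near. Qed.

HB.instance Definition _ {R : realType} {q1 : R -> R} (H : goodq q1) :=
  isCumulativeBounded.Build R 0 1 (fQ H) (fQ_Ny H) (fQ_y H).

Lemma fQ_ls_Nyc {R : realType} {q1 : R -> R} (H : goodq q1) (r : R) :
  lebesgue_stieltjes_measure (fQ H) `]-oo, r] = (fQ H r)%:E.
Proof.
have := cdf_lebesgue_stieltjes_id (fQ H) r.
by rewrite /cdf /distribution /pushforward /= preimage_id.
Qed.

Lemma fQ_ls_oc {R : realType} {q1 : R -> R} (H : goodq q1) (a b : R) : a <= b ->
  lebesgue_stieltjes_measure (fQ H) `]a, b] = (fQ H b - fQ H a)%:E.
Proof.
move=> ab.
rewrite /lebesgue_stieltjes_measure /measure_extension/=.
rewrite measurable_mu_extE/=; last exact: is_ocitv.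
by rewrite wlength_itv_bnd.
Qed.

Lemma fQ_ls1 {R : realType} {q1 : R -> R} (H : goodq q1) (r : R) :
  lebesgue_stieltjes_measure (fQ H) [set r] = 0%E.
Proof.
set mu := lebesgue_stieltjes_measure (fQ H).
have h1 : mu `]r - n.+1%:R^-1, r]%classic @[n --> \oo] --> mu [set r].
  rewrite set1_bigcap_oc.
  apply: nonincreasing_cvg_mu => //.
  - by rewrite (le_lt_trans (probability_le1 _ _)) ?ltry.
  - exact: bigcap_measurable.
  - move=> m n mn; apply/subsetPset; apply: subset_itv; rewrite // bnd_simp.
    by rewrite lerB // lef_pV2 ?posrE // ler_nat.
have h2 : mu `]r - n.+1%:R^-1, r]%classic @[n --> \oo] --> 0%E.
  have -> : (fun n => mu `]r - n.+1%:R^-1, r]%classic) =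
      (fun n : nat => (fQ H r - fQ H (r - n.+1%:R^-1))%:E).
    by apply/funext => n; rewrite -fQ_ls_oc // lerBlDr lerDl.
  apply/EFin_cvgP; rewrite -(subrr (fQ H r)).
  apply: cvgB; first exact: cvg_cst.
  have hs : (r - n.+1%:R^-1) @[n --> \oo] --> r.
    rewrite -[X in _ --> X]subr0; apply: cvgB; first exact: cvg_cst.
    exact: cvg_harmonic.
  apply: cvg_comp hs _. exact: fQ_cont.
exact: (cvg_unique _ h1 h2).
Qed.



Lemma small_inv {R : realType} (c : R) : 0 < c -> exists k : nat, k.+1%:R^-1 < c.
Proof.
move=> c0; exists (Num.Def.truncn c^-1).
rewrite -[X in _ < X](invrK c) ltf_pV2 ?posrE ?invr_gt0 // ?ltr0n //.
exact: truncnS_gt.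
Qed.

Lemma right_lim_aux {R : realType} (g : R -> R) (p0 : R) (h : nat -> R) :
  (forall k p, p0 < p -> p < p0 + k.+1%:R^-1 -> h k <= g p <= g p0) ->
  h k @[k --> \oo] --> g p0 -> g @ p0^'+ --> g p0.
Proof.
move=> H hc; apply/cvgrPdist_le => e e0.
move/cvgrPdist_le: hc => /(_ e e0) [N _ HN].
have /= hN := HN N (leqnn N).
near=> t.
have t1 : p0 < t by near: t; exact: nbhs_right_gt.
have t2 : t < p0 + N.+1%:R^-1.
  by near: t; apply: nbhs_right_lt; rewrite ltrDl invr_gt0 ltr0n.
have /andP[a b] := H N t t1 t2.
rewrite ger0_norm ?subr_ge0 //.
apply: le_trans hN; apply: le_trans (ler_norm _).
by rewrite lerD2l lerN2.
Unshelve. all: by end_near. Qed.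

Lemma left_lim_aux {R : realType} (g : R -> R) (p0 : R) (h : nat -> R) :
  (forall k p, p0 - k.+1%:R^-1 < p -> p < p0 -> g p0 <= g p <= h k) ->
  h k @[k --> \oo] --> g p0 -> g @ p0^'- --> g p0.
Proof.
move=> H hc; apply/cvgrPdist_le => e e0.
move/cvgrPdist_le: hc => /(_ e e0) [N _ HN].
have /= hN := HN N (leqnn N).
near=> t.
have t2 : t < p0 by near: t; exact: nbhs_left_lt.
have t1 : p0 - N.+1%:R^-1 < t.
  by near: t; apply: nbhs_left_gt; rewrite gtrBl invr_gt0 ltr0n.
have /andP[a b] := H N t t1 t2.
rewrite ler0_norm ?subr_le0 // opprB.
apply: le_trans hN; rewrite distrC; apply: le_trans (ler_norm _).
by rewrite lerD2r.
Unshelve. all: by end_near. Qed.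



Lemma backward {R : realType} (q1 : R -> R) (H : goodq q1) : QRUM_rationalizable q1.
Proof.
pose P : probability (measurableTypeR R) R := lebesgue_stieltjes_measure (fQ H).
pose V0 : measurableTypeR R -> R := fun x => x.
pose V1 : measurableTypeR R -> R := fun _ => 0.
pose be : measurableTypeR R -> R := fun _ => 1.
have qp : forall p, qrum_prob P V0 V1 be p = (Qx q1 p)%:E.
  move=> p; rewrite /qrum_prob /V0 /V1 /be.
  have -> : [set eta : measurableTypeR R | eta <= 0 - 1 * p] = `]-oo, - p]%classic.
    by apply/seteqP; split => x /=; rewrite in_itv /= sub0r mul1r.
  have -> : Qx q1 p = fQ H (- p) by rewrite /fQ opprK.
  by rewrite -fQ_ls_Nyc.
have Qp : forall p, 0 <= p -> Qx q1 p = q1 p.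
  by move=> p p0; rewrite /Qx max_l.
have HH := H; case: HH => _ _ _ [pL [pH [pL0 pH0 cL cH]]].
exists _, (measurableTypeR R), P, V0, V1, be; split.
  split => //.
  - exact: measurable_id.
  - exact: measurable_cst.
  - exact: measurable_cst.
split.
- by move=> p p0; rewrite qp Qp.
- move=> p p0; rewrite /qrum_tie /V0 /V1 /be.
  have -> : [set eta : measurableTypeR R | eta = 0 - 1 * p] = [set - p].
    by apply/seteqP; split => x /=; rewrite sub0r mul1r.
  exact: fQ_ls1.
- exists pL, pH; split => //.
  + have e : {near pL^'+, (fun p => (q1 p)%:E) =1 qrum_prob P V0 V1 be}.
      near=> p.
      have p0 : pL < p by near: p; exact: nbhs_right_gt.
      by rewrite qp Qp // ltW // (le_lt_trans pL0 p0).
    apply: cvg_trans (near_eq_cvg e) _.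
    exact/EFin_cvgP.
  + have e : {near pH^'-, (fun p => (q1 p)%:E) =1 qrum_prob P V0 V1 be}.
      near=> p.
      have p0 : 0 < p by near: p; exact: nbhs_left_gt.
      by rewrite qp Qp // ltW.
    apply: cvg_trans (near_eq_cvg e) _.
    exact/EFin_cvgP.
Unshelve. all: by end_near. Qed.



Lemma forward {R : realType} (q1 : R -> R)
  (hq1 : forall p : R, 0 <= p -> 0 <= q1 p <= 1) :
  QRUM_rationalizable q1 -> goodq q1.
Proof.
move=> [d [T [P [V0 [V1 [be [[mV0 mV1 mbe be0] [eqq tie [pL [pH [pL0 pH0 cL cH]]]]]]]]]]].
pose A p := [set x | V0 x <= V1 x - be x * p].
pose S p := [set x | V0 x < V1 x - be x * p].
pose Ti p := [set x | V0 x = V1 x - be x * p].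
have mD : forall p, measurable_fun setT (fun x => V1 x - be x * p - V0 x).
  move=> p; apply: measurable_funB => //; apply: measurable_funB => //.
  exact: measurable_funM.
have mA : forall p, measurable (A p).
  move=> p; have -> : A p = (fun x => V1 x - be x * p - V0 x) @^-1` `[0, +oo[.
    by apply/seteqP; split => x /=; rewrite in_itv /= andbT subr_ge0.
  by rewrite -[X in measurable X]setTI; apply: mD.
have mT : forall p, measurable (Ti p).
  move=> p; have -> : Ti p = (fun x => V1 x - be x * p - V0 x) @^-1` [set 0].
    apply/seteqP; split => x; rewrite /A /S /Ti /=.
      by move=> ->; rewrite subrr.
    by move/eqP; rewrite subr_eq0 eq_sym => /eqP.
  by rewrite -[X in measurable X]setTI; apply: mD.
have mS : forall p, measurable (S p).
  move=> p; have -> : S p = A p `\` Ti p.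
    apply/seteqP; split => x; rewrite /A /S /Ti /=.
      by move=> h; split; [exact: ltW | move=> e; move: h; rewrite e ltxx].
    by case=> h1 h2; rewrite lt_neqAle h1 andbT; apply/eqP.
  exact: measurableD.
have AST : forall p, A p = S p `|` Ti p.
  move=> p; apply/seteqP; split => x; rewrite /A /S /Ti /=.
    by rewrite le_eqVlt => /orP[/eqP ->|->]; [right|left].
  by case=> [/ltW|->].
have PAS : forall p, 0 <= p -> P (A p) = P (S p).
  move=> p p0; have t0 : P (Ti p) = 0 := tie p p0.
  rewrite AST measureU //; first by rewrite -[RHS]adde0; congr (_ + _); exact: t0.
  by apply/seteqP; split => x //=; rewrite /S /Ti /= => -[] /[swap] -> ; rewrite ltxx.
pose g p := fine (P (A p)).
have gE : forall p, P (A p) = (g p)%:E.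
  by move=> p; rewrite fineK // fin_num_measure.
have gq : forall p, 0 <= p -> g p = q1 p.
  by move=> p p0; apply/EFin_inj; rewrite -gE eqq.
have Amono : forall x y, x <= y -> A y `<=` A x.
  move=> x y xy z /= h; apply: le_trans h _.
  by rewrite lerD2l lerN2 ler_pM2l.
have gmono : forall x y, x <= y -> g y <= g x.
  move=> x y xy; rewrite -lee_fin -!gE.
  by apply: le_measure; rewrite ?inE //; exact: Amono.
have Sbig : forall p0, S p0 = \bigcup_k A (p0 + k.+1%:R^-1).
  move=> p0; apply/seteqP; split => x; rewrite /A /S /=.
    move=> h.
    have c0 : 0 < (V1 x - be x * p0 - V0 x) / be x.
      by rewrite divr_gt0 // subr_gt0.
    have [k hk] := small_inv _ c0.
    exists k => //=.
    move: hk; rewrite ltr_pdivlMr // => hk.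
    rewrite mulrDr; move: hk; rewrite [k.+1%:R^-1 * _]mulrC.
    move: (be x / k.+1%:R) (be x * p0) => t u; lra.
  move=> [k _ /=] h.
  have : 0 < be x * k.+1%:R^-1 by rewrite mulr_gt0 // invr_gt0 ltr0n.
  move: h; rewrite mulrDr.
  move: (be x * k.+1%:R^-1) (be x * p0) => t u; lra.
have Abig : forall p0, A p0 = \bigcap_k A (p0 - k.+1%:R^-1).
  move=> p0; apply/seteqP; split => x; rewrite /A /=.
    move=> h k _ /=.
    have : 0 < be x * k.+1%:R^-1 by rewrite mulr_gt0 // invr_gt0 ltr0n.
    move: h; rewrite mulrBr.
    move: (be x * k.+1%:R^-1) (be x * p0) => t u; lra.
  move=> h; rewrite leNgt; apply/negP => hx.
  have c0 : 0 < (V0 x - (V1 x - be x * p0)) / be x.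
    by rewrite divr_gt0 // subr_gt0.
  have [k hk] := small_inv _ c0.
  have := h k I; rewrite /=.
  move: hk; rewrite ltr_pdivlMr // => hk.
  rewrite mulrBr; move: hk; rewrite [k.+1%:R^-1 * _]mulrC.
  move: (be x / k.+1%:R) (be x * p0) => t u; lra.
have gr : forall p0, 0 <= p0 -> g @ p0^'+ --> g p0.
  move=> p0 p00; apply: (@right_lim_aux _ g p0 (fun k => g (p0 + k.+1%:R^-1))).
    move=> k p h1 h2; rewrite !gmono // ?ltW //.
  have c1 : P (A (p0 + k.+1%:R^-1)) @[k --> \oo] --> P (S p0).
    rewrite Sbig; apply: nondecreasing_cvg_mu => //.
      exact: bigcup_measurable.
    move=> m n mn; apply/subsetPset; apply: Amono.
    by rewrite lerD2l lef_pV2 ?posrE // ler_nat.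
  rewrite -PAS // gE in c1.
  exact: (fine_cvg c1).
have gl : forall p0, 0 <= p0 -> g @ p0^'- --> g p0.
  move=> p0 p00; apply: (@left_lim_aux _ g p0 (fun k => g (p0 - k.+1%:R^-1))).
    move=> k p h1 h2; rewrite !gmono // ?ltW //.
  have c1 : P (A (p0 - k.+1%:R^-1)) @[k --> \oo] --> P (A p0).
    rewrite [X in _ --> P X]Abig; apply: nonincreasing_cvg_mu => //.
    - by rewrite (le_lt_trans (probability_le1 _ _)) ?ltry.
    - exact: bigcap_measurable.
    - move=> m n mn; apply/subsetPset; apply: Amono.
      by rewrite lerD2l lerN2 lef_pV2 ?posrE // ler_nat.
  rewrite gE in c1.
  exact: (fine_cvg c1).
have cg : forall p0 : R, 0 <= p0 -> g x @[x --> p0] --> g p0.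
  by move=> p0 p00; apply/left_right_continuousP; split; [exact: gl|exact: gr].
split => //.
- move=> x y x0 xy; rewrite -!gq //; last exact: le_trans xy.
  exact: gmono.
- apply/continuous_within_itvcyP; split.
    move=> x; rewrite in_itv /= andbT => x0.
    have e : {near (x : R), g =1 q1}.
      near=> y.
      have y0 : 0 < y by near: y; exact: lt_nbhsr.
      by rewrite gq // ltW.
    rewrite /continuous_at -gq ?ltW //.
    exact: cvg_trans (near_eq_cvg e) (cg x (ltW x0)).
  have e : {near (0 : R)^'+, g =1 q1}.
    near=> y.
    have y0 : 0 < y by near: y; exact: nbhs_right_gt.
    by rewrite gq // ltW.
  rewrite -gq //.
  exact: cvg_trans (near_eq_cvg e) (gr 0 (lexx 0)).
- exists pL, pH; split => //.
  + apply/EFin_cvgP; apply: cvg_trans cL; apply: near_eq_cvg; near=> p.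
    have p0 : pL < p by near: p; exact: nbhs_right_gt.
    by rewrite -eqq // ltW // (le_lt_trans pL0 p0).
  + apply/EFin_cvgP; apply: cvg_trans cH; apply: near_eq_cvg; near=> p.
    have p0 : 0 < p by near: p; exact: nbhs_left_gt.
    by rewrite -eqq // ltW.
Unshelve. all: by end_near. Qed.

Theorem corollary1 (R : realType) (q1 : R -> R)
  (hq1 : forall p : R, 0 <= p -> 0 <= q1 p <= 1) :
  QRUM_rationalizable q1 <->
  [/\ nonincreasing_on_prices q1,
      {within `[0, +oo[, continuous q1} &
      exists pL pH : R, [/\ 0 <= pL, 0 < pH,
        q1 p @[p --> pL^'+] --> (1 : R) &
        q1 p @[p --> pH^'-] --> (0 : R)]].
Proof.
split.
  by move=> h; have [_ ? ? ?] := @forward R q1 hq1 h; split.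
by move=> [A B C]; apply: backward; split.
Qed.
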